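(* Let $p,m$ be integers with $m\ge1$ and $0\le p\le[\frac m2]$, and let $c_j=c_j(p,m)$. Then $\frac{2c_1}{m-1}+\frac{c_2}{2}+c_3>0$ in each of the following cases: ($p=0$, $m\ge2$); ($p=1$, $m\ge3$); ($p\ge2$, $m\ge17$); ($p<\frac m2$, $5\le m\le16$).
   Context: With $\binom ab=0$ for $b<0$: $c_1=\frac1{180}\binom mp-\frac1{12}\binom{m-2}{p-1}+\frac12\binom{m-4}{p-2}$, $c_2=-\frac1{180}\binom mp+\frac12\binom{m-2}{p-1}-2\binom{m-4}{p-2}$, $c_3=\frac1{72}\binom mp-\frac16\binom{m-2}{p-1}+\frac12\binom{m-4}{p-2}$. *)

(* Defs.v *)
From HB Require Import structures.
From mathcomp Require Import all_boot all_order all_algebra.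
Set Implicit Arguments. Unset Strict Implicit. Unset Printing Implicit Defensive.
Import Order.TTheory GRing.Theory Num.Theory.
Local Open Scope ring_scope.

(* Binomial coefficient binom a b for integers a, b with the paper's convention
   binom a b = 0 for b < 0.  For b >= 0 we use the generalized binomial
   a(a-1)...(a-b+1)/b!, which agrees with 'C(a,b) when a >= 0. *)
Definition binomZ (a b : int) : rat :=
  match b with
  | Posz k => (\prod_(i < k) ((a - i%:Z)%:~R : rat)) / (k`!)%:R
  | Negz _ => 0
  end.

Definition c1 (p m : nat) : rat :=
  1/180 * binomZ m p - 1/12 * binomZ (m%:Z - 2) (p%:Z - 1)
  + 1/2 * binomZ (m%:Z - 4) (p%:Z - 2).
Definition c2 (p m : nat) : rat :=
  - (1/180) * binomZ m p + 1/2 * binomZ (m%:Z - 2) (p%:Z - 1)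
  - 2 * binomZ (m%:Z - 4) (p%:Z - 2).
Definition c3 (p m : nat) : rat :=
  1/72 * binomZ m p - 1/6 * binomZ (m%:Z - 2) (p%:Z - 1)
  + 1/2 * binomZ (m%:Z - 4) (p%:Z - 2).

(* Main.v *)
Require Import Defs.
From HB Require Import structures.
From mathcomp Require Import all_boot all_order all_algebra.
From mathcomp Require Import zify ring lra.
Import Order.TTheory GRing.Theory Num.Theory.
Local Open Scope ring_scope.

Lemma prod_ffact (n k : nat) :
  \prod_(i < k) ((n%:Z - i%:Z)%:~R : rat) = (n ^_ k)%:R.
Proof.
elim: k => [|k IH]; first by rewrite big_ord0 ffactn0.
rewrite big_ord_recr /= IH ffactnSr natrM.
have [lekn|ltnk] := leqP k n.
  by rewrite (subzn lekn).
by rewrite ffact_small // !mul0r.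
Qed.

Lemma binomZ_nat (n k : nat) : binomZ n k = ('C(n, k))%:R.
Proof.
rewrite /binomZ prod_ffact -bin_ffact natrM mulfK //.
by rewrite pnatr_eq0 -lt0n fact_gt0.
Qed.

Lemma step (a b N : nat) : N = (a + b)%N ->
  ('C(N.+2, a.+1) * a.+1 * b.+1 = N.+1 * N.+2 * 'C(N, a))%N.
Proof.
move=> hN.
have h1 := mul_bin_diag N.+1 a.
have h2 := mul_bin_down N.+2 a.+1.
rewrite /= in h1 h2.
have e : (N.+2 - a.+1 = b.+1)%N by lia.
rewrite e in h2.
move: h1 h2; set C0 := 'C(N, a); set C1 := 'C(N.+1, a.+1); set C2 := 'C(N.+2, a.+1).
move=> h1 h2.
have -> : (C2 * a.+1 * b.+1 = a.+1 * (b.+1 * C2))%N by ring.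
rewrite -h2.
have -> : (a.+1 * (N.+2 * C1) = N.+2 * (a.+1 * C1))%N by ring.
rewrite -h1; ring.
Qed.

Definition Fpoly (x y : rat) : rat :=
  let a := x + 2 in let b := y + 2 in let s := a + b in
  2 * s ^+ 2 * (s - 1) * (s - 2) + 15 * (s - 3) * (s - 2) * a * b
  - 90 * a * b * (a - 1) * (b - 1).

Lemma key (q r : nat) : 0 < Fpoly q%:R r%:R ->
  0 < 2 * c1 q.+2 (q + r).+4 / ((q + r).+4%:R - 1)
      + c2 q.+2 (q + r).+4 / 2 + c3 q.+2 (q + r).+4.
Proof.
move=> hF.
rewrite /c1 /c2 /c3.
have e1 : ((q + r).+4%:Z - 2 = (q + r).+2 :> int) by lia.
have e2 : (q.+2%:Z - 1 = q.+1 :> int) by lia.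
have e3 : ((q + r).+4%:Z - 4 = (q + r) :> int) by lia.
have e4 : (q.+2%:Z - 2 = q :> int) by lia.
rewrite e1 e2 e3 e4 !binomZ_nat.
have h1 := step q r (q + r) erefl.
have h2 := step q.+1 r.+1 (q + r).+2 ltac:(lia).
have hK : (0 < 'C(q + r, q))%N by rewrite bin_gt0 leq_addr.
move: h1 h2 hK.
set K := 'C(q + r, q); set K1 := 'C((q + r).+2, q.+1); set K2 := 'C((q + r).+4, q.+2).
move=> h1 h2 hK.
clearbody K K1 K2.
rewrite -[q.+1]addn1 -[r.+1]addn1 -[(q+r).+2]addn2 -[(q+r).+1]addn1 in h1.
rewrite -[q.+2]addn2 -[r.+2]addn2 -[(q+r).+4]addn4 -[(q+r).+3]addn3 in h2.
rewrite -[(q+r).+4]addn4.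
have h1r : (K1 * (q + 1) * (r + 1))%:R = ((q + r + 1) * (q + r + 2) * K)%:R :> rat by rewrite h1.
have h2r : (K2 * (q + 2) * (r + 2))%:R = ((q + r + 3) * (q + r + 4) * K1)%:R :> rat by rewrite h2.
rewrite -(ltr0n rat) in hK.
move: h1r h2r hK hF.
rewrite !natrM !natrD.
set x := (q%:R : rat); set y := (r%:R : rat); set k := (K%:R : rat); set k1 := (K1%:R : rat); set k2 := (K2%:R : rat).
move=> h1r h2r hK hF.
have hx : 0 <= x by rewrite /x ler0n.
have hy : 0 <= y by rewrite /y ler0n.
clearbody x y k k1 k2.
have ek1 : k1 = (x + y + 1) * (x + y + 2) * k / ((x + 1) * (y + 1)).
  rewrite -h1r; field; apply/andP; split; apply/eqP; lra.
have ek2 : k2 = (x + y + 3) * (x + y + 4) * k1 / ((x + 2) * (y + 2)).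
  rewrite -h2r; field; apply/andP; split; apply/eqP; lra.
rewrite ek2 ek1.
have hP : 0 < (x + 1) * (y + 1) * (x + 2) * (y + 2).
  apply: mulr_gt0; last lra.
  apply: mulr_gt0; last lra.
  apply: mulr_gt0; lra.
rewrite [X in 0 < X](_ : _ = k * (x + y + 1) * Fpoly x y / (180 * (x + y + 3) * ((x + 1) * (y + 1) * (x + 2) * (y + 2)))).
  apply: divr_gt0.
    have hk1 : 0 < k * (x + y + 1) by apply: mulr_gt0 => //; lra.
    exact: mulr_gt0.
  have h180 : 0 < 180 * (x + y + 3) by apply: mulr_gt0; lra.
  exact: mulr_gt0.
rewrite /Fpoly; field.
by apply/and5P; split; apply/eqP; lra.
Qed.

Lemma comb (A B u v D F : rat) : 0 < A -> 0 < B -> 0 <= u -> 0 <= v -> 0 < D -> u + v = D ->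
  D * F = A * v + B * u + 90 * D * u * v -> 0 < F.
Proof.
move=> hA hB hu hv hD huv key.
have hD0 : 0 <= 90 * D by lra.
have h3 : 0 <= 90 * D * u * v by apply: mulr_ge0; [apply: mulr_ge0|]; assumption.
have hAv : 0 <= A * v by apply: mulr_ge0; [apply: ltW|]; assumption.
have hBu : 0 <= B * u by apply: mulr_ge0; [apply: ltW|]; assumption.
have hpos : 0 < A * v + B * u + 90 * D * u * v.
  have [hu2|hu2] := lerP (D / 2) u.
    have : 0 < B * u by apply: mulr_gt0; [assumption|lra].
    lra.
  have : 0 < A * v by apply: mulr_gt0; [assumption|lra].
  lra.
rewrite -key in hpos.
by rewrite (pmulr_rgt0 _ hD) in hpos.
Qed.

Lemma conc (s t : rat) : 17 <= s -> 2 * (s - 2) <= t -> t <= s ^+ 2 / 4 ->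
  0 < 2 * s ^+ 2 * (s - 1) * (s - 2) + 15 * (s - 3) * (s - 2) * t - 90 * t * (t - s + 1).
Proof.
move=> hs h0 h1.
have hs2 : 0 < s ^+ 2 by apply: exprn_gt0; lra.
apply: (@comb ((s - 2) * (2 * s ^+ 3 - 2 * s ^+ 2 + 30 * (s - 3) * (s - 8)))
   (s ^+ 2 * (s - 2) * (s - 16) / 8) (t - 2 * (s - 2)) (s ^+ 2 / 4 - t) ((s - 4) ^+ 2 / 4)).
- apply: mulr_gt0; first lra.
  have : 0 <= (s - 3) * (s - 8) by apply: mulr_ge0; lra.
  have : 0 < s ^+ 2 * (s - 1) by apply: mulr_gt0; [assumption|lra].
  rewrite exprS; lra.
- apply: divr_gt0; last lra.
  apply: mulr_gt0; last lra; apply: mulr_gt0; [assumption|lra].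
- lra.
- lra.
- apply: divr_gt0; last lra. apply: exprn_gt0; lra.
- by field.
- by field.
Qed.

Lemma binomZ_neg (a b : int) : b < 0 -> binomZ a b = 0.
Proof. by case: b. Qed.

Lemma binomZ_0 (a : int) : binomZ a (Posz 0) = 1.
Proof. by rewrite /binomZ big_ord0 fact0 divr1. Qed.


Lemma case_p0 (m : nat) : (2 <= m)%N ->
  0 < 2 * c1 0 m / (m%:R - 1) + c2 0 m / 2 + c3 0 m.
Proof.
move=> hm.
rewrite /c1 /c2 /c3 binomZ_nat bin0 !binomZ_neg; [|by lia|by lia].
have hz : 2 <= (m%:R : rat) by rewrite (ler_nat rat 2 m).
set z := (m%:R : rat) in hz *.
clearbody z.
rewrite [X in 0 < X](_ : _ = z / (90 * (z - 1))).
  apply: divr_gt0; lra.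
field; apply/eqP; lra.
Qed.

Lemma case_p1 (m : nat) : (3 <= m)%N ->
  0 < 2 * c1 1 m / (m%:R - 1) + c2 1 m / 2 + c3 1 m.
Proof.
move=> hm.
rewrite /c1 /c2 /c3 binomZ_nat bin1 (binomZ_neg (m%:Z - 4)); last by lia.
rewrite (_ : (1%:Z - 1 = Posz 0)%R); last by lia.
rewrite binomZ_0.
have hz : 3 <= (m%:R : rat) by rewrite (ler_nat rat 3 m).
set z := (m%:R : rat) in hz *.
clearbody z.
rewrite [X in 0 < X](_ : _ = (z ^+ 2 / 90 + (z - 1) / 12 - 1 / 6) / (z - 1)).
  apply: divr_gt0; last lra.
  have : 9 <= z ^+ 2 by rewrite expr2; nra.
  lra.
field; apply/eqP; lra.
Qed.

Lemma tab : all (fun q => all (fun r => ((q < r)%N && (q + r <= 12)%N) ==> (0 < Fpoly q%:R r%:R)) (iota 0 13)) (iota 0 6).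
Proof. by vm_compute. Qed.

Lemma Ffin (q r : nat) : (q < r)%N -> (q + r <= 12)%N -> 0 < Fpoly q%:R r%:R.
Proof.
move=> h1 h2.
have := tab; move/allP/(_ q).
rewrite mem_iota => /(_ ltac:(apply/andP; split; lia)) /allP /(_ r).
rewrite mem_iota => /(_ ltac:(apply/andP; split; lia)).
by rewrite h1 h2.
Qed.

Lemma Fbig (q r : nat) : (q <= r)%N -> (13 <= q + r)%N -> 0 < Fpoly q%:R r%:R.
Proof.
move=> h1 h2.
have hs : (13 : rat) <= (q + r)%:R by rewrite (ler_nat rat 13).
have hxy : (q%:R : rat) <= r%:R by rewrite ler_nat.
have hx : 0 <= (q%:R : rat) by rewrite ler0n.
have hy : 0 <= (r%:R : rat) by rewrite ler0n.
rewrite natrD in hs.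
move: hs hxy hx hy.
set x := (q%:R : rat); set y := (r%:R : rat).
move=> hs hxy hx hy.
clearbody x y.
rewrite (_ : Fpoly x y = let s := x + y + 4 in let t := (x + 2) * (y + 2) in
  2 * s ^+ 2 * (s - 1) * (s - 2) + 15 * (s - 3) * (s - 2) * t - 90 * t * (t - s + 1)); last first.
  by rewrite /Fpoly /=; ring.
rewrite /=.
apply: conc.
- lra.
- have := mulr_ge0 hx hy; lra.
- have h := sqr_ge0 (x - y).
  rewrite expr2 in h *.
  nra.
Qed.

Theorem lemma5p4 (p m : nat) :
  (1 <= m)%N -> (p <= m./2)%N ->
  [\/ (p = 0%N /\ (2 <= m)%N),
      (p = 1%N /\ (3 <= m)%N),
      ((2 <= p)%N /\ (17 <= m)%N)
    | ((p.*2 < m)%N /\ (5 <= m <= 16)%N)] ->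
  0 < 2 * c1 p m / (m%:R - 1) + c2 p m / 2 + c3 p m.
Proof.
move=> hm hp [[-> hm2]|[-> hm3]|[hp2 hm17]|[hpm /andP[hm5 hm16]]].
- exact: case_p0.
- exact: case_p1.
- have [q eq] : exists q, p = q.+2 by exists (p - 2)%N; lia.
  subst p.
  have [r er] : exists r, m = (q + r).+4 by exists (m - q - 4)%N; lia.
  subst m.
  apply: key; apply: Fbig; lia.
- case: p hp hpm => [|[|q]] hp hpm.
  + apply: case_p0; lia.
  + apply: case_p1; lia.
  + have [r er] : exists r, m = (q + r).+4 by exists (m - q - 4)%N; lia.
    subst m.
    apply: key; apply: Ffin; lia.
Qed.
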